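(* Let $M$ be a commutative and cocommutative Hopf algebra over $\mathbb{C}$ and $A$ a commutative $\mathbb{C}$-algebra. Let $r$ be an $A$-valued bicharacter on $M$ with symmetrization $s=r\circ r^t$, and let $s_1$ be any symmetric $A$-valued bicharacter on $M$. Put $s_2=s\circ s_1$. Then for all $a,b\in M$, \[ \mathrm{EQ}_{r}(a\bullet_{s_1}b)=\mathrm{EQ}_{r}(a)\bullet_{s_2}\mathrm{EQ}_{r}(b). \]
   Context: For a Hopf algebra $M$ with coproduct $\Delta$ and counit $\eta$, Sweedler notation: $\Delta(a)=\sum a'\otimes a''$, $\Delta^2(a)=\sum a'\otimes a''\otimes a'''$. An $A$-valued bicharacter on $M$ is a linear map $r:M\otimes M\to A$ with $r(1\otimes a)=\eta(a)=r(a\otimes 1)$, $r(ab\otimes c)=\sum r(a\otimes c')r(b\otimes c'')$, $r(a\otimes bc)=\sum r(a'\otimes b)r(a''\otimes c)$ for all $a,b,c\in M$. Convolution: $(r\circ t)(a\otimes b)=\sum r(a'\otimes b')t(a''\otimes b'')$; $r^t(a\otimes b)=r(b\otimes a)$; $t$ is symmetric if $t=t^t$; the symmetrization of $r$ is $r\circ r^t$. $M_A=M\otimes_{\mathbb{C}}A$. For a symmetric bicharacter $t$, $\bullet_t$ is the $A$-bilinear product on $M_A$ extending $a\bullet_t b=\sum a'b'\,t(a''\otimes b'')$. $\mathrm{EQ}_r:M\to M_A$, $\mathrm{EQ}_r(m)=\sum r(m'\otimes m'')m'''$, extended $A$-linearly to $M_A$. *)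

(* Defs.v *)
(* Hopf algebras over C (= complex numbers over Stdlib's
   real numbers, as a mathcomp fieldType), encoded with Sweedler-style
   representatives of coproducts. *)
From HB Require Import structures.
From mathcomp Require Import all_boot all_order all_algebra.
From mathcomp Require Import Rstruct.
From mathcomp Require Import complex.

Set Implicit Arguments.
Unset Strict Implicit.
Unset Printing Implicit Defensive.
Import GRing.Theory.
Local Open Scope ring_scope.

Notation CC := (complex Rdefinitions.R).

(** An element of U (x) W is represented by a finite formal sum
    [s : seq (U * W)] standing for \sum_(p <- s) p.1 (x) p.2.
    Two such sums are equal in U (x) W iff every C-bilinear map out of
    U * W (into any C-vector space) takes the same value on them. *)

Definition bilinear_map (U W V : lmodType CC) (f : U -> W -> V) : Prop :=
  (forall w, linear (fun u => f u w)) /\ (forall u, linear (f u)).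

Definition trilinear_map (U W X V : lmodType CC) (f : U -> W -> X -> V) : Prop :=
  [/\ (forall w x, linear (fun u => f u w x)),
      (forall u x, linear (fun w => f u w x)) &
      (forall u w, linear (f u w))].

Definition teq (U W : lmodType CC) (s t : seq (U * W)) : Prop :=
  forall (V : lmodType CC) (f : U -> W -> V), bilinear_map f ->
    \sum_(p <- s) f p.1 p.2 = \sum_(p <- t) f p.1 p.2.

Definition teq3 (U W X : lmodType CC) (s t : seq (U * W * X)) : Prop :=
  forall (V : lmodType CC) (f : U -> W -> X -> V), trilinear_map f ->
    \sum_(p <- s) f p.1.1 p.1.2 p.2 = \sum_(p <- t) f p.1.1 p.1.2 p.2.

Definition tmul (M : comAlgType CC) (s t : seq (M * M)) : seq (M * M) :=
  [seq (p.1 * q.1, p.2 * q.2) | p <- s, q <- t].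

Record cc_hopf_algebra (M : comAlgType CC) (cop : M -> seq (M * M))
    (eps : M -> CC) (S : M -> M) : Prop := {
  cop_linear : forall (k : CC) (a b : M),
      teq (cop (k *: a + b))
          ([seq (k *: p.1, p.2) | p <- cop a] ++ cop b);
  cop_mul : forall a b : M, teq (cop (a * b)) (tmul (cop a) (cop b));
  cop_one : teq (cop 1) [:: (1, 1)];
  cop_coassoc : forall a : M,
      teq3 (flatten [seq [seq (q.1, q.2, p.2) | q <- cop p.1] | p <- cop a])
           (flatten [seq [seq (p.1, q.1, q.2) | q <- cop p.2] | p <- cop a]);
  eps_linear : forall (k : CC) (a b : M), eps (k *: a + b) = k * eps a + eps b;
  eps_mul : forall a b : M, eps (a * b) = eps a * eps b;
  eps_one : eps 1 = 1;
  counit_l : forall a : M, \sum_(p <- cop a) eps p.1 *: p.2 = a;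
  counit_r : forall a : M, \sum_(p <- cop a) eps p.2 *: p.1 = a;
  S_linear : linear S;
  antipode_l : forall a : M, \sum_(p <- cop a) S p.1 * p.2 = (eps a)%:A;
  antipode_r : forall a : M, \sum_(p <- cop a) p.1 * S p.2 = (eps a)%:A;
  cop_cocomm : forall a : M, teq (cop a) [seq (p.2, p.1) | p <- cop a]
}.

Section Bicharacters.
Variables (M A : comAlgType CC) (cop : M -> seq (M * M)) (eps : M -> CC).

Definition bicharacter (r : M -> M -> A) : Prop :=
  [/\ bilinear_map r,
      (forall a : M, r 1 a = (eps a)%:A),
      (forall a : M, r a 1 = (eps a)%:A),
      (forall a b c : M, r (a * b) c = \sum_(q <- cop c) r a q.1 * r b q.2) &
      (forall a b c : M, r a (b * c) = \sum_(p <- cop a) r p.1 b * r p.2 c)].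

Definition conv (r t : M -> M -> A) : M -> M -> A :=
  fun a b => \sum_(p <- cop a) \sum_(q <- cop b) r p.1 q.1 * t p.2 q.2.

Definition transp (r : M -> M -> A) : M -> M -> A := fun a b => r b a.

Definition symmetric_bichar (t : M -> M -> A) : Prop := forall a b, t a b = t b a.

Definition symmetrization (r : M -> M -> A) := conv r (transp r).

(** M_A = M (x)_C A, elements represented by seq (M * A) *)
Definition teqA (x y : seq (M * A)) : Prop := teq x y.

Definition toMA (m : M) : seq (M * A) := [:: (m, 1)].

(** the A-bilinear product on M_A extending a .t b = \sum a'b' t(a'' (x) b'') *)
Definition bullet (t : M -> M -> A) (x y : seq (M * A)) : seq (M * A) :=
  flatten [seq flatten [seq [seq (u.1 * v.1, p.2 * q.2 * t u.2 v.2)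
                             | u <- cop p.1, v <- cop q.1]
                        | q <- y]
          | p <- x].

Definition cop2 (m : M) : seq (M * M * M) :=
  flatten [seq [seq (p.1, q.1, q.2) | q <- cop p.2] | p <- cop m].

Definition EQ (r : M -> M -> A) (m : M) : seq (M * A) :=
  [seq (x.2, r x.1.1 x.1.2) | x <- cop2 m].

Definition EQA (r : M -> M -> A) (x : seq (M * A)) : seq (M * A) :=
  flatten [seq [seq (q.1, p.2 * q.2) | q <- EQ r p.1] | p <- x].

End Bicharacters.

(* Main.v *)
Require Import Defs.
From HB Require Import structures.
From mathcomp Require Import all_boot all_order all_algebra.
From mathcomp Require Import Rstruct complex.
From Stdlib Require Import Morphisms Setoid.
Import GRing.Theory.
Set Implicit Arguments.
Unset Strict Implicit.
Unset Printing Implicit Defensive.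
Local Open Scope ring_scope.

Lemma lin_id (U : lmodType CC) : linear (fun x : U => x).
Proof. by move=> k u v. Qed.

Lemma lin_mull (U : lmodType CC) (B : comAlgType CC) (F : U -> B) (c : B) :
  linear F -> linear (fun x => F x * c).
Proof. by move=> HF k u v /=; rewrite HF mulrDl scalerAl. Qed.

Lemma lin_mulr (U : lmodType CC) (B : comAlgType CC) (F : U -> B) (c : B) :
  linear F -> linear (fun x => c * F x).
Proof. by move=> HF k u v /=; rewrite HF mulrDr scalerAr. Qed.

Lemma lin_bil1 (U W X V : lmodType CC) (g : W -> X -> V) (F : U -> W) (c : X) :
  bilinear_map g -> linear F -> linear (fun x => g (F x) c).
Proof. by move=> [H1 H2] HF k u v /=; rewrite HF H1. Qed.

Lemma lin_bil2 (U W X V : lmodType CC) (g : W -> X -> V) (F : U -> X) (c : W) :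
  bilinear_map g -> linear F -> linear (fun x => g c (F x)).
Proof. by move=> [H1 H2] HF k u v /=; rewrite HF H2. Qed.

Lemma lin_sumF (U V : lmodType CC) (I : Type) (s : seq I) (F : I -> U -> V) :
  (forall i, linear (F i)) -> linear (fun x => \sum_(i <- s) F i x).
Proof.
move=> HF k u v /=.
under eq_bigr do rewrite HF.
by rewrite big_split /= scaler_sumr.
Qed.

Lemma lin_pull (U V : lmodType CC) (g : U -> V) (I : Type) (s : seq I) (F : I -> U) :
  linear g -> g (\sum_(i <- s) F i) = \sum_(i <- s) g (F i).
Proof.
move=> Hg.
have g0 : g 0 = 0.
  have := Hg 1 0 0; rewrite !scale1r addr0 => h.
  by apply: (addrI (g 0)); rewrite addr0 -h.
elim: s => [|i s IH]; first by rewrite !big_nil.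
by rewrite !big_cons -IH -[g (F i + _)]/(g (F i + _)) -{1}(scale1r (F i)) Hg scale1r.
Qed.

Lemma lin0 (U V : lmodType CC) (g : U -> V) : linear g -> g 0 = 0.
Proof.
move=> Hg; have := Hg 1 0 0; rewrite !scale1r addr0 => h.
by apply: (addrI (g 0)); rewrite addr0 -h.
Qed.

Lemma linZ (U V : lmodType CC) (g : U -> V) k u : linear g -> g (k *: u) = k *: g u.
Proof. by move=> Hg; have := Hg k u 0; rewrite !addr0 (lin0 Hg) addr0. Qed.

Lemma linD (U V : lmodType CC) (g : U -> V) u v : linear g -> g (u + v) = g u + g v.
Proof. by move=> Hg; have := Hg 1 u v; rewrite !scale1r. Qed.

Section Hopf.
Variables (M : comAlgType CC) (cop : M -> seq (M * M)) (eps : M -> CC) (S : M -> M).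
Hypothesis HH : cc_hopf_algebra cop eps S.

Definition D (V : lmodType CC) (F : M -> M -> V) (x : M) : V :=
  \sum_(p <- cop x) F p.1 p.2.

Lemma D_ext (V : lmodType CC) (F G : M -> M -> V) x :
  (forall a b, F a b = G a b) -> D F x = D G x.
Proof. by move=> h; apply: eq_bigr => p _; apply: h. Qed.

Lemma D_lin (V : lmodType CC) (F : M -> M -> V) :
  bilinear_map F -> linear (D F).
Proof.
move=> HF k a b; rewrite /D (cop_linear HH k a b HF) big_cat /= big_map /=.
congr (_ + _); rewrite scaler_sumr; apply: eq_bigr => p _.
by rewrite (linZ _ _ (HF.1 p.2)).
Qed.

Lemma lin_D (U V : lmodType CC) (F : M -> M -> V) (G : U -> M) :
  bilinear_map F -> linear G -> linear (fun x => D F (G x)).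
Proof. by move=> HF HG k u v /=; rewrite HG D_lin. Qed.

Lemma lin_DF (U V : lmodType CC) (F : U -> M -> M -> V) (y : M) :
  (forall a b, linear (fun x => F x a b)) -> linear (fun x => D (F x) y).
Proof. by move=> HF; apply: lin_sumF => p; apply: HF. Qed.

Lemma D_comm (V : lmodType CC) (F : M -> M -> V) x :
  bilinear_map F -> D F x = D (fun a b => F b a) x.
Proof. by move=> HF; rewrite /D (cop_cocomm HH x HF) big_map. Qed.

Lemma D_assoc (V : lmodType CC) (H : M -> M -> M -> V) x :
  (forall y z, linear (fun u => H u y z)) ->
  (forall u z, linear (fun y => H u y z)) ->
  (forall u y, linear (H u y)) ->
  D (fun p1 p2 => D (fun q1 q2 => H q1 q2 p2) p1) x =
  D (fun p1 p2 => D (fun q1 q2 => H p1 q1 q2) p2) x.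
Proof.
move=> H1 H2 H3.
have := @cop_coassoc _ _ _ _ HH x _ H.
rewrite !big_flatten /= !big_map.
move=> h.
transitivity (\sum_(j <- cop x) \sum_(i <- [seq (q.1, q.2, j.2) | q <- cop j.1]) H i.1.1 i.1.2 i.2).
  by rewrite /D; apply: eq_bigr => p _; rewrite big_map.
rewrite h; last by split.
by rewrite /D; apply: eq_bigr => p _; rewrite big_map.

Qed.

Lemma D_mul (V : lmodType CC) (F : M -> M -> V) x y :
  bilinear_map F ->
  D F (x * y) = D (fun p1 p2 => D (fun q1 q2 => F (p1 * q1) (p2 * q2)) y) x.
Proof. by move=> HF; rewrite /D (cop_mul HH x y HF) /tmul big_allpairs_dep. Qed.

Lemma D_exch (V : lmodType CC) (F : M -> M -> M -> M -> V) x y :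
  D (fun a b => D (F a b) y) x = D (fun c d => D (fun a b => F a b c d) x) y.
Proof. by rewrite /D exchange_big. Qed.


Ltac lin_step :=
  match goal with
  | |- bilinear_map _ => split
  | |- forall _, _ => intros
  | |- _ => first [ assumption
                  | match goal with Hl : forall _, _ |- _ => apply: Hl end
                  | apply: lin_id | apply: lin_DF
                  | match goal with Hg : bilinear_map _ |- _ => apply: (lin_D _ Hg) end
                  | apply: lin_D
                  | apply: lin_mull | apply: lin_mulr
                  | match goal with Hg : bilinear_map _ |- _ => apply: (lin_bil1 _ Hg) end
                  | match goal with Hg : bilinear_map _ |- _ => apply: (lin_bil2 _ Hg) end
                  | apply: lin_sumF ]
  end.
Ltac lin := repeat lin_step.

Definition T3 (V : lmodType CC) (K : M -> M -> M -> V) y :=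
  D (fun a r => D (fun b c => K a b c) r) y.

Lemma T3_sw12 (V : lmodType CC) (K : M -> M -> M -> V) y :
  (forall y z, linear (fun u => K u y z)) ->
  (forall u z, linear (fun y => K u y z)) ->
  (forall u y, linear (K u y)) ->
  T3 K y = T3 (fun a b c => K b a c) y.
Proof.
move=> H1 H2 H3; rewrite /T3 -(D_assoc (H := K)) //.
transitivity (D (fun p1 p2 => D (fun q1 q2 => K q2 q1 p2) p1) y).
  by apply: D_ext => p1 p2; apply: D_comm; lin.
by rewrite (D_assoc (H := fun a b c => K b a c)).
Qed.


Definition S3 (V : lmodType CC) (G : M -> M -> M -> M -> V) x :=
  D (fun a1 r1 => D (fun a2 r2 => D (fun a3 a4 => G a1 a2 a3 a4) r2) r1) x.
Definition B3 (V : lmodType CC) (G : M -> M -> M -> M -> V) x :=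
  D (fun p1 p2 => D (fun t1 t2 => D (fun u1 u2 => G t1 t2 u1 u2) p2) p1) x.
Definition L3 (V : lmodType CC) (G : M -> M -> M -> M -> V) x :=
  D (fun u1 u2 => D (fun p1 p2 => D (fun q1 q2 => G q1 q2 p2 u2) p1) u1) x.

Section ML4.
Variables (V : lmodType CC) (G : M -> M -> M -> M -> V).
Hypotheses (G1 : forall b c d, linear (fun a => G a b c d))
  (G2 : forall a c d, linear (fun b => G a b c d))
  (G3 : forall a b d, linear (fun c => G a b c d))
  (G4 : forall a b c, linear (fun d => G a b c d)).

Lemma B3_S3 x : B3 G x = S3 G x.
Proof. by rewrite /B3 (D_assoc (H := fun a b z => D (G a b) z)); lin. Qed.

Lemma L3_S3 x : L3 G x = S3 G x.
Proof.
rewrite /L3.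
transitivity (D (fun u1 u2 => D (fun p1 p2 => D (fun q1 q2 => G p1 q1 q2 u2) p2) u1) x).
  apply: D_ext => u1 u2; rewrite (D_assoc (H := fun a b c => G a b c u2)) //; lin.
rewrite (D_assoc (H := fun a b z => D (fun q1 q2 => G a q1 q2 z) b)) //; try by lin.
apply: D_ext => u1 u2.
by rewrite (D_assoc (H := fun a b c => G u1 a b c)) //; lin.
Qed.

Lemma S3_sw34 x : S3 G x = S3 (fun a b c d => G a b d c) x.
Proof.
apply: D_ext => a1 r1; apply: D_ext => a2 r2.
by rewrite D_comm //; lin.
Qed.

Lemma S3_sw23 x : S3 G x = S3 (fun a b c d => G a c b d) x.
Proof.
apply: D_ext => a1 r1.
change (T3 (G a1) r1 = T3 (fun a b c => G a1 b a c) r1).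
by apply: T3_sw12; lin.
Qed.

Lemma S3_sw12 x : S3 G x = S3 (fun a b c d => G b a c d) x.
Proof.
change (T3 (fun a b z => D (G a b) z) x = T3 (fun a b z => D (G b a) z) x).
by apply: T3_sw12; lin.
Qed.
End ML4.

End Hopf.

Ltac lin_step :=
  match goal with
  | |- bilinear_map _ => split
  | |- cc_hopf_algebra _ _ _ => eassumption
  | |- forall _, _ => intros
  | |- _ => first [ assumption
                  | match goal with Hl : forall _, _ |- _ => apply: Hl end
                  | apply: lin_id | apply: lin_DF
                  | match goal with Hg : bilinear_map _ |- _ => apply: (lin_D _ Hg) end
                  | apply: lin_D
                  | apply: lin_mull | apply: lin_mulr
                  | match goal with Hg : bilinear_map _ |- _ => apply: (lin_bil1 _ Hg) end
                  | match goal with Hg : bilinear_map _ |- _ => apply: (lin_bil2 _ Hg) end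
                  | apply: lin_sumF ]
  end.
Ltac lin := repeat lin_step.

Section Main.
Variables (M A : comAlgType CC) (cop : M -> seq (M * M)) (eps : M -> CC) (S : M -> M).
Hypothesis HH : cc_hopf_algebra cop eps S.
Variable r : M -> M -> A.
Hypothesis Hrb : bilinear_map r.
Hypothesis Hr4 : forall a b c, r (a * b) c = D cop (fun q1 q2 => r a q1 * r b q2) c.
Hypothesis Hr5 : forall a b c, r a (b * c) = D cop (fun p1 p2 => r p1 b * r p2 c) a.

Instance D_proper (V : lmodType CC) :
  Proper (pointwise_relation M (pointwise_relation M eq) ==> eq ==> eq) (@D M cop V).
Proof. by move=> F G h x _ <-; apply: D_ext. Qed.

Instance fun_eq_proper (X Y : Type) (g : X -> Y) : Proper (eq ==> eq) g | 100.
Proof. by move=> ? ? ->. Qed.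

Lemma D_mulr2 (F : M -> M -> A) x c1 c2 : c1 * c2 * D cop F x = D cop (fun a b => c1 * c2 * F a b) x.
Proof. by rewrite /D mulr_sumr. Qed.

Lemma D_mull (F : M -> M -> A) x c : D cop F x * c = D cop (fun a b => F a b * c) x.
Proof. by rewrite /D mulr_suml. Qed.
Lemma D_mulr (F : M -> M -> A) x c : c * D cop F x = D cop (fun a b => c * F a b) x.
Proof. by rewrite /D mulr_sumr. Qed.

Lemma S3_ext (V : lmodType CC) (F G : M -> M -> M -> M -> V) x :
  (forall a b c d, F a b c d = G a b c d) -> S3 cop F x = S3 cop G x.
Proof.
move=> h; apply: D_ext => ? ?; apply: D_ext => ? ?; apply: D_ext => ? ?; exact: h.
Qed.

Lemma Dmul_rr a b c d :
  D cop (fun w1 w2 => r a w1 * r b w2) (c * d) =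
  D cop (fun u1 u2 => D cop (fun v1 v2 => r a (u1 * v1) * r b (v2 * u2)) d) c.
Proof.
rewrite (D_mul HH); last by lin.
by apply: D_ext => u1 u2; apply: D_ext => v1 v2; rewrite (mulrC v2).
Qed.

Definition sr x y := D cop (fun p1 p2 => D cop (fun q1 q2 => r p1 q1 * r q2 p2) y) x.

Lemma sr_bil : bilinear_map sr.
Proof. by rewrite /sr; lin. Qed.

Tactic Notation "ex" int_or_var(n) := eapply eq_trans; [ do n (apply: D_ext => ? ?); apply: D_exch | ].

Tactic Notation "inner" tactic(t) :=
  eapply eq_trans; [apply: S3_ext => ? ? ? ?; t; [reflexivity | try solve [lin] ..] | ].

Lemma star_common x y :
  D cop r (x * y) =
  S3 cop (fun x1 x2 x3 x4 => S3 cop (fun y1 y2 y3 y4 =>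
     r x1 x2 * r y1 y2 * (r x3 y3 * r y4 x4)) y) x.
Proof.
rewrite (D_mul HH) //.
setoid_rewrite Hr4.
setoid_rewrite Dmul_rr.
setoid_rewrite Hr5.
repeat setoid_rewrite D_mull.
repeat setoid_rewrite D_mulr.
ex 3. ex 2. ex 4. ex 1. ex 2.
match goal with |- _ = ?R => change (B3 cop (fun x1 x2 x3 x4 => B3 cop (fun y1 y2 y3 y4 =>
   r x1 x3 * r x2 y3 * (r y1 y4 * r y2 x4)) y) x = R) end.
rewrite (B3_S3 HH); try solve [rewrite /B3; lin].
inner (rewrite (B3_S3 HH)).
rewrite (S3_sw23 HH); try solve [rewrite /S3; lin].
inner (rewrite (S3_sw34 HH)).
inner (rewrite (S3_sw23 HH)).
inner (rewrite (S3_sw34 HH)).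
apply: S3_ext => x1 x2 x3 x4; apply: S3_ext => y1 y2 y3 y4 /=.
by rewrite mulrACA.
Qed.

Lemma star_rhs x y :
  D cop (fun p1 p2 => D cop (fun q1 q2 => D cop r p1 * D cop r q1 * sr p2 q2) y) x =
  S3 cop (fun x1 x2 x3 x4 => S3 cop (fun y1 y2 y3 y4 =>
     r x1 x2 * r y1 y2 * (r x3 y3 * r y4 x4)) y) x.
Proof.
rewrite /sr.
repeat (first [setoid_rewrite D_mull | setoid_rewrite D_mulr]).
ex 1. ex 2. ex 4.
match goal with |- _ = ?R => change (B3 cop (fun x1 x2 x3 x4 => B3 cop (fun y1 y2 y3 y4 =>
   r x1 x2 * r y1 y2 * (r x3 y3 * r y4 x4)) y) x = R) end.
rewrite (B3_S3 HH); try solve [rewrite /B3; lin].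
inner (rewrite (B3_S3 HH)).
by [].
Qed.

Lemma star x y : D cop r (x * y) =
  D cop (fun p1 p2 => D cop (fun q1 q2 => D cop r p1 * D cop r q1 * sr p2 q2) y) x.
Proof. by rewrite star_common star_rhs. Qed.

Variable s1 : M -> M -> A.
Hypothesis Hs1 : bilinear_map s1.
Variables (V : lmodType CC) (f : M -> A -> V).
Hypothesis Hf : bilinear_map f.

Lemma Df_pull m c (F : M -> M -> A) x :
  f m (c * D cop F x) = D cop (fun a b => f m (c * F a b)) x.
Proof. by rewrite D_mulr /D (@lin_pull _ _ (f m)) //; apply: Hf.2. Qed.

Lemma Df_pull0 m (F : M -> M -> A) x :
  f m (D cop F x) = D cop (fun a b => f m (F a b)) x.
Proof. by rewrite /D (@lin_pull _ _ (f m)) //; apply: Hf.2. Qed.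

Lemma lhs_raw a b :
  \sum_(p <- EQA cop r (bullet cop s1 (toMA A a) (toMA A b))) f p.1 p.2 =
  D cop (fun u1 u2 => D cop (fun v1 v2 =>
    D cop (fun P1 P2 => D cop (fun Q1 Q2 => f Q2 (s1 u2 v2 * r P1 Q1)) P2) (u1 * v1)) b) a.
Proof.
rewrite /EQA /bullet /toMA /EQ /cop2 /= !cats0 big_allpairs_dep big_allpairs_dep /=.
apply: eq_bigr => u _; apply: eq_bigr => v _.
rewrite big_map big_allpairs_dep /= !mul1r.
by [].
Qed.

Lemma rhs_raw a b :
  \sum_(p <- bullet cop (conv cop (symmetrization cop r) s1)
      (EQA cop r (toMA A a)) (EQA cop r (toMA A b))) f p.1 p.2 =
  D cop (fun P1 P2 => D cop (fun Q1 Q2 => D cop (fun P'1 P'2 => D cop (fun Q'1 Q'2 =>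
    D cop (fun u1 u2 => D cop (fun v1 v2 =>
      f (u1 * v1) (r P1 Q1 * r P'1 Q'1 * conv cop (symmetrization cop r) s1 u2 v2)) Q'2) Q2) P'2) b) P2) a.
Proof.
rewrite /EQA /bullet /toMA /EQ /cop2 /= !cats0.
rewrite big_flatten /= !big_map big_allpairs_dep /=.
apply: eq_bigr => P _; apply: eq_bigr => Q _.
rewrite big_flatten /= !big_map big_allpairs_dep /=.
apply: eq_bigr => P' _; apply: eq_bigr => Q' _.
by rewrite big_allpairs_dep /= !mul1r.
Qed.

Lemma lhs_common a b :
  D cop (fun u1 u2 => D cop (fun v1 v2 =>
    D cop (fun P1 P2 => D cop (fun Q1 Q2 => f Q2 (s1 u2 v2 * r P1 Q1)) P2) (u1 * v1)) b) a =
  S3 cop (fun x1 x2 x3 x4 => S3 cop (fun y1 y2 y3 y4 =>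
     f (x2 * y2) (s1 x4 y4 * (D cop r x1 * D cop r y1 * sr x3 y3))) b) a.
Proof.
transitivity (D cop (fun u1 u2 => D cop (fun v1 v2 => D cop (fun x1 x2 => D cop (fun y1 y2 =>
    f (x2 * y2) (s1 u2 v2 * D cop r (x1 * y1))) v1) u1) b) a).
  apply: D_ext => u1 u2; apply: D_ext => v1 v2.
  rewrite -(D_assoc HH (H := fun x y z => f z (s1 u2 v2 * r x y))); try solve [lin].
  setoid_rewrite <- (Df_pull _ _ r).
  by rewrite (D_mul HH); last by lin.
setoid_rewrite star.
repeat setoid_rewrite Df_pull.
ex 1. ex 3. ex 2.
match goal with |- _ = ?R => change (L3 cop (fun x1 x2 x3 x4 => L3 cop (fun y1 y2 y3 y4 =>
   f (x3 * y3) (s1 x4 y4 * (D cop r x1 * D cop r y1 * sr x2 y2))) b) a = R) end.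
rewrite (L3_S3 HH); try solve [rewrite /L3; lin].
inner (rewrite (L3_S3 HH)).
rewrite (S3_sw23 HH); try solve [rewrite /S3; lin].
inner (rewrite (S3_sw23 HH)).
by [].
Qed.
Notation s2 := (conv cop (symmetrization cop r) s1).

Lemma s2_bil : bilinear_map s2.
Proof.
have h : bilinear_map (fun x y => D cop (fun p1 p2 => D cop (fun q1 q2 => sr p1 q1 * s1 p2 q2) y) x).
  by have := sr_bil; lin.
exact: h.
Qed.

Definition Zf a b := D cop (fun P1 P2 => D cop (fun Q1 Q2 => D cop (fun P'1 P'2 => D cop (fun Q'1 Q'2 =>
    D cop (fun u1 u2 => D cop (fun v1 v2 =>
      f (u1 * v1) (r Q1 Q2 * r Q'1 Q'2 * s2 u2 v2)) P'2) P2) P'1) b) P1) a.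

Lemma raw_Z a b :
  D cop (fun P1 P2 => D cop (fun Q1 Q2 => D cop (fun P'1 P'2 => D cop (fun Q'1 Q'2 =>
    D cop (fun u1 u2 => D cop (fun v1 v2 =>
      f (u1 * v1) (r P1 Q1 * r P'1 Q'1 * s2 u2 v2)) Q'2) Q2) P'2) b) P2) a = Zf a b.
Proof.
have s2b := s2_bil.
rewrite -(D_assoc HH (H := fun x y z => D cop (fun P'1 P'2 => D cop (fun Q'1 Q'2 =>
    D cop (fun u1 u2 => D cop (fun v1 v2 =>
      f (u1 * v1) (r x y * r P'1 Q'1 * s2 u2 v2)) Q'2) z) P'2) b)); try solve [lin].
apply: D_ext => P1 P2; apply: D_ext => Q1 Q2.
rewrite -(D_assoc HH (H := fun x y z =>
    D cop (fun u1 u2 => D cop (fun v1 v2 =>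
      f (u1 * v1) (r Q1 Q2 * r x y * s2 u2 v2)) z) P2)); try solve [lin].
by [].
Qed.

Lemma Tp_Z a b :
  D cop (fun P1 P2 => D cop (fun P'1 P'2 => D cop (fun u1 u2 => D cop (fun v1 v2 =>
    f (u1 * v1) (D cop r P1 * D cop r P'1 * s2 u2 v2)) P'2) P2) b) a = Zf a b.
Proof.
repeat (first [setoid_rewrite D_mull | setoid_rewrite D_mulr]).
repeat setoid_rewrite Df_pull0.
ex 3. ex 2. ex 1. ex 4. ex 3.
by [].
Qed.
Lemma s2_eq x y : s2 x y = D cop (fun p1 p2 => D cop (fun q1 q2 => sr p1 q1 * s1 p2 q2) y) x.
Proof. by []. Qed.

Lemma Tp_S3 a b :
  D cop (fun P1 P2 => D cop (fun P'1 P'2 => D cop (fun u1 u2 => D cop (fun v1 v2 =>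
    f (u1 * v1) (D cop r P1 * D cop r P'1 * s2 u2 v2)) P'2) P2) b) a =
  S3 cop (fun x1 x2 x3 x4 => S3 cop (fun y1 y2 y3 y4 =>
     f (x2 * y2) (D cop r x1 * D cop r y1 * (sr x3 y3 * s1 x4 y4))) b) a.
Proof.
setoid_rewrite s2_eq.
repeat (first [setoid_rewrite D_mulr2 | setoid_rewrite Df_pull0]).
ex 1. ex 3. ex 2.
by [].
Qed.
Lemma main_pair a b :
  \sum_(p <- EQA cop r (bullet cop s1 (toMA A a) (toMA A b))) f p.1 p.2 =
  \sum_(p <- bullet cop s2 (EQA cop r (toMA A a)) (EQA cop r (toMA A b))) f p.1 p.2.
Proof.
rewrite lhs_raw lhs_common rhs_raw raw_Z -Tp_Z Tp_S3.
apply: S3_ext => x1 x2 x3 x4; apply: S3_ext => y1 y2 y3 y4.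
by rewrite /= [in LHS](mulrC (s1 _ _)) !mulrA.
Qed.
End Main.

Unset Implicit Arguments.

Theorem theorem2p9 (M : comAlgType CC) (cop : M -> seq (M * M))
    (eps : M -> CC) (S : M -> M) (A : comAlgType CC) (r s1 : M -> M -> A) :
  cc_hopf_algebra cop eps S ->
  bicharacter cop eps r ->
  bicharacter cop eps s1 -> symmetric_bichar s1 ->
  let s := symmetrization cop r in
  let s2 := conv cop s s1 in
  forall a b : M,
    teqA (EQA cop r (bullet cop s1 (toMA A a) (toMA A b)))
         (bullet cop s2 (EQA cop r (toMA A a)) (EQA cop r (toMA A b))).
Proof.
move=> HH [Hrb _ _ Hr4 Hr5] [Hs1 _ _ _ _] _ s s2 a b V f Hf.
exact: (main_pair HH Hrb Hr4 Hr5 Hs1 Hf a b).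
Qed.
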